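(* Let $g,r,d$ and ramification sequences $\alpha,\beta$ satisfy $\rho(g,r,d,\alpha,\beta)=0$. Then the EH group acts transitively on $YT(g,r,d,\alpha,\beta)$.
   Context: Ramification sequences: $\alpha=(\alpha_0,\dots,\alpha_r)$ integers with $d-r\ge\alpha_0\ge\cdots\ge\alpha_r\ge0$, $|\alpha|=\sum\alpha_i$; $g-d+r\ge0$; $\rho(g,r,d,\alpha,\beta)=g-(r+1)(g-d+r)-|\alpha|-|\beta|$. Skew diagram $\sigma(g,r,d,\alpha,\beta)$ (with $m=g-d+r$): rows $k=1,\dots,r+1$ numbered top to bottom, row $k$ consisting of boxes $(k,c)$ with $\alpha_0-\alpha_{r+1-k}<c\le\alpha_0+m+\beta_{k-1}$ (columns numbered left to right); it has $g$ boxes when $\rho=0$. $YT(g,r,d,\alpha,\beta)$ is the set of standard Young tableaux of this shape: bijective fillings with $1,\dots,g$ strictly increasing along rows (left to right) and columns (top to bottom). The distance between boxes $(i,j),(i',j')$ is $|i-i'|+|j-j'|$. For $1\le t<g$ and $a>0$, $\pi_{t,a}$ is the permutation of $YT(g,r,d,\alpha,\beta)$ exchanging the entries $t$ and $t+1$ in every tableau where they lie in different rows and different columns at distance exactly $a$, and fixing all other tableaux. The EH group is the subgroup of the symmetric group on $YT(g,r,d,\alpha,\beta)$ generated by all $\pi_{t,a}$. *)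

(* Defs.v *)
From mathcomp Require Import all_boot all_order all_algebra.
Unset Printing Implicit Defensive.

(* A box is a pair (row, column) of natural numbers; rows are numbered
   1..r+1 top to bottom, columns left to right. *)
Definition box := (nat * nat)%type.

Definition ram_seq (r d : nat) (al : seq nat) : Prop :=
  [/\ size al = r.+1, r <= d,
      (forall i, i < r.+1 -> nth 0 al i <= d - r) &
      (forall i j, i <= j -> j < r.+1 -> nth 0 al j <= nth 0 al i)].

Definition rho (g r d : nat) (al be : seq nat) : int :=
  (g%:Z - (r.+1)%:Z * (g%:Z - d%:Z + r%:Z) - (sumn al)%:Z - (sumn be)%:Z)%R.

(* The skew diagram sigma(g,r,d,alpha,beta), m = g - d + r (assumed >= 0):
   row k (1 <= k <= r+1) consists of the boxes (k,c) with
   alpha_0 - alpha_{r+1-k} < c <= alpha_0 + m + beta_{k-1}. *)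
Definition in_sigma (g r d : nat) (al be : seq nat) (b : box) : bool :=
  let: (k, c) := b in
  let m := g + r - d in
  [&& 1 <= k, k <= r.+1,
      nth 0 al 0 - nth 0 al (r.+1 - k) < c &
      c <= nth 0 al 0 + m + nth 0 be k.-1].

(* A filling with entries 1..g is encoded by the position map
   T : {ffun 'I_g -> box}, where T i is the box containing the entry i+1. *)
Definition filling (g : nat) := {ffun 'I_g -> box}.

Definition is_SYT (g r d : nat) (al be : seq nat) (T : filling g) : Prop :=
  [/\ (forall i, in_sigma g r d al be (T i)),
      injective T,
      (forall b, in_sigma g r d al be b -> exists i, T i = b),
      (forall i j : 'I_g, (T i).1 = (T j).1 -> (T i).2 < (T j).2 -> i < j) &
      (forall i j : 'I_g, (T i).2 = (T j).2 -> (T i).1 < (T j).1 -> i < j)].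

Definition YT (g r d : nat) (al be : seq nat) : Type :=
  {T : filling g | is_SYT g r d al be T}.

Definition box_dist (b b' : box) : nat :=
  (b.1 - b'.1) + (b'.1 - b.1) + ((b.2 - b'.2) + (b'.2 - b.2)).

(* pi_{t,a}: exchange the entries t and t+1 (indices t-1 and t) if their
   boxes lie in different rows and different columns at distance exactly a;
   otherwise leave the tableau unchanged. *)
Definition pi_ta (g : nat) (t a : nat) (T : filling g) : filling g :=
  match (insub t.-1 : option 'I_g), (insub t : option 'I_g) with
  | Some i, Some j =>
      if [&& (T i).1 != (T j).1, (T i).2 != (T j).2 & box_dist (T i) (T j) == a]
      then [ffun x => if x == i then T j else if x == j then T i else T x]
      else T
  | _, _ => T
  end.

Definition EH_gen (g : nat) (ta : nat * nat) : bool :=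
  [&& 1 <= ta.1, ta.1 < g & 0 < ta.2].

Definition act_word (g : nat) (w : seq (nat * nat)) (T : filling g) : filling g :=
  foldl (fun U ta => pi_ta g ta.1 ta.2 U) T w.

(* Main.v *)
Require Import Defs.
From mathcomp Require Import all_boot all_order all_algebra.
From mathcomp Require Import zify.
Set Implicit Arguments. Unset Strict Implicit.

Definition cond g (f1 f2 : box -> nat) (U : filling g) :=
  forall a b : 'I_g, f1 (U a) = f1 (U b) -> f2 (U a) < f2 (U b) -> a < b.

Definition swapf g (i k : 'I_g) (U : filling g) : filling g :=
  [ffun z => if z == i then U k else if z == k then U i else U z].

Lemma ord_neq g (a b : 'I_g) : a != b -> nat_of_ord a <> nat_of_ord b.
Proof. by move=> /eqP h e; apply: h; apply: val_inj. Qed.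

Lemma pi_ta_swap g (i k : 'I_g) (U : filling g) : k = i.+1 :> nat ->
  (U i).1 != (U k).1 -> (U i).2 != (U k).2 ->
  pi_ta g k (box_dist (U i) (U k)) U = swapf i k U.
Proof.
move=> hk h1 h2; rewrite /pi_ta.
have -> : (k : nat).-1 = val i by rewrite hk.
by rewrite !valK h1 h2 eqxx.
Qed.

Lemma cond_swap g f1 f2 (U : filling g) (i k : 'I_g) : k = i.+1 :> nat ->
  f1 (U i) <> f1 (U k) -> cond f1 f2 U -> cond f1 f2 (swapf i k U).
Proof.
move=> hk hne hc a b; rewrite !ffunE.
case: (eqVneq a i) => [->|/ord_neq hai];
 [|case: (eqVneq a k) => [->|/ord_neq hak]];
 case: (eqVneq b i) => [->|/ord_neq hbi];
 try (case: (eqVneq b k) => [->|/ord_neq hbk]);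
 move=> e1 e2; try (by exfalso; apply: hne; congruence);
 try (by rewrite ltnn in e2);
 have := hc _ _ e1 e2; lia.
Qed.

Definition sw g (i k a : 'I_g) := if a == i then k else if a == k then i else a.

Lemma swapE g (U : filling g) i k a : swapf i k U a = U (sw i k a).
Proof. by rewrite ffunE /sw; case: (a == i); case: (a == k). Qed.

Lemma swK g (i k : 'I_g) : involutive (sw i k).
Proof.
move=> a; rewrite /sw.
case: (eqVneq a i) => [->|hai]; first by rewrite eqxx; case: eqVneq => [->|]; rewrite ?eqxx.
case: (eqVneq a k) => [->|hak]; first by rewrite eqxx.
by rewrite (negbTE hai) (negbTE hak).
Qed.

Lemma swap_inj g (U : filling g) (i k : 'I_g) : injective U -> injective (swapf i k U).
Proof.
move=> hi a b; rewrite !swapE => /hi; exact: (inv_inj (@swK g i k)).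
Qed.

Lemma swap_img g (U T' : filling g) (i k : 'I_g) :
  (forall j, exists a, U a = T' j) -> (forall j, exists a, swapf i k U a = T' j).
Proof.
move=> h j; have [a ea] := h j.
by exists (sw i k a); rewrite swapE swK.
Qed.

Lemma swap_img2 g (U T' : filling g) (i k : 'I_g) :
  (forall a, exists j, T' j = U a) -> (forall a, exists j, T' j = swapf i k U a).
Proof. by move=> h a; rewrite swapE; apply: h. Qed.

Lemma diff_coord g f1 f2 (U T' : filling g) (i k P : 'I_g) :
  (forall b b' : box, f1 b = f1 b' -> f2 b = f2 b' -> b = b') ->
  injective U -> cond f1 f2 U -> cond f1 f2 T' ->
  (forall a, exists j, T' j = U a) ->
  (forall a : 'I_g, a < P -> U a = T' a) ->
  U k = T' P -> k = i.+1 :> nat -> P <= i ->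
  f1 (U i) <> f1 (U k).
Proof.
move=> hb hi hc hc' him hag hk hki hPi e1.
case: (ltngtP (f2 (U i)) (f2 (U k))) => h.
- have [j ej] := him i.
  case: (ltngtP j P) => hj.
  + have := hag _ hj; rewrite ej => /hi ji; rewrite ji in hj; lia.
  + rewrite -ej hk in e1 h; have := hc' _ _ e1 h; lia.
  + have ejP : j = P by apply: val_inj.
    rewrite ejP -hk in ej; have := hi _ _ ej => ik; rewrite ik in hki; lia.
- have := hc _ _ (esym e1) h; lia.
- have := hi _ _ (hb _ _ e1 h) => ik; subst; lia.
Qed.

Definition Inv g (T' U : filling g) :=
  [/\ injective U, cond fst snd U, cond snd fst U,
      (forall j, exists a, U a = T' j) & (forall a, exists j, T' j = U a)].

Lemma pairE (b b' : box) : b.1 = b'.1 -> b.2 = b'.2 -> b = b'.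
Proof. by case: b b' => [x y] [x' y'] /= -> ->. Qed.

Lemma bubble g (T' : filling g) (P : 'I_g) : cond fst snd T' -> cond snd fst T' ->
  forall n (U : filling g) (k : 'I_g), Inv T' U ->
  (forall a : 'I_g, a < P -> U a = T' a) -> U k = T' P -> k = P + n :> nat ->
  exists w, all (EH_gen g) w /\
    [/\ Inv T' (act_word g w U), (forall a : 'I_g, a < P -> act_word g w U a = T' a)
      & act_word g w U P = T' P].
Proof.
move=> c1 c2; elim=> [|n IH] U k [hi h1 h2 hm1 hm2] hag hk hkn.
  have kP : k = P by apply: val_inj; rewrite /= hkn addn0.
  exists [::]; split => //=; split; [by split | exact: hag | by rewrite /= -hk kP].
have hi1 : (k.-1 < g)%N by have := ltn_ord k; lia.
set i := Ordinal hi1.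
have hki : k = i.+1 :> nat by rewrite /= hkn; lia.
have hPi : P <= i by rewrite /= hkn; lia.
have d1 := diff_coord pairE hi h1 c1 hm2 hag hk hki hPi.
have d2 : (U i).2 <> (U k).2.
  apply: (diff_coord (f1 := snd) (f2 := fst) _ hi h2 c2 hm2 hag hk hki hPi).
  by move=> b b' e1 e2; apply: pairE.
have hsw := pi_ta_swap (U := U) hki (introN eqP d1) (introN eqP d2).
have J1 : Inv T' (swapf i k U).
  rewrite /Inv; split; [exact: swap_inj|exact: (cond_swap hki d1 h1)|exact: (cond_swap hki d2 h2)|exact: swap_img|exact: swap_img2].
have J2 : forall a : 'I_g, a < P -> swapf i k U a = T' a.
  move=> a ha; rewrite swapE /sw.
  have -> : (a == i) = false by apply/eqP => e; rewrite e in ha; lia.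
  have -> : (a == k) = false by apply/eqP => e; rewrite e in ha; lia.
  exact: hag.
have J3 : swapf i k U i = T' P by rewrite swapE /sw eqxx.
have J4 : i = P + n :> nat by rewrite /= hkn; lia.
have [w [hw [I1 I2 I3]]] := IH (swapf i k U) i J1 J2 J3 J4.
exists ((nat_of_ord k, box_dist (U i) (U k)) :: w); split.
  rewrite /= hw andbT /EH_gen /= ltn_ord.
  apply/andP; split; first by rewrite hki.
  rewrite /box_dist; lia.
by rewrite /act_word /= hsw.
Qed.

Theorem proposition4p1 (g r d : nat) (al be : seq nat) :
  ram_seq r d al -> ram_seq r d be ->
  d <= g + r ->
  rho g r d al be = 0%R ->
  forall T T' : filling g,
    is_SYT g r d al be T -> is_SYT g r d al be T' ->
    exists w : seq (nat * nat), all (EH_gen g) w /\ act_word g w T = T'.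
Proof.
move=> _ _ _ _ T T' [s1 i1 o1 r1 c1] [s2 i2 o2 r2 c2].
have c1' : cond fst snd T by [].
have c2' : cond snd fst T by [].
have c1'' : cond fst snd T' by [].
have c2'' : cond snd fst T' by [].
have main : forall p, p <= g -> exists w, all (EH_gen g) w /\
   Inv T' (act_word g w T) /\ forall a : 'I_g, a < p -> act_word g w T a = T' a.
  elim=> [|p IH] hp.
    exists [::]; split => //; split => //; split => //.
    - by move=> j; apply: o1.
    - by move=> a; apply: o2.
  have [w1 [hw1 [hI hA]]] := IH (ltnW hp).
  set U := act_word g w1 T in hI hA.
  have hpg : (p < g)%N by [].
  set P := Ordinal hpg.
  have [k hk] : exists k, U k = T' P by case: hI => _ _ _ h _; apply: h.
  have hkp : p <= k.
    rewrite leqNgt; apply/negP => hkp.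
    have := hA _ hkp; rewrite hk => /i2 e.
    by move: hkp; rewrite -e /= ltnn.
  have [w2 [hw2 [J1 J2 J3]]] := @bubble g T' P c1'' c2'' (k - p) U k hI hA hk
     (ltac:(rewrite /=; lia)).
  exists (w1 ++ w2); rewrite all_cat hw1 hw2 /act_word foldl_cat -/(act_word g w1 T) -/U.
  split => //; split => // a ha.
  case: (ltngtP a p) => h; [exact: J2 | lia | ].
  by have -> : a = P by apply: val_inj.
have [w [hw [_ hA]]] := main g (leqnn g).
by exists w; split => //; apply/ffunP => a; apply: hA.
Qed.
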